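(* Let $q\in(0,\tfrac12)$ and let $T\sim U(1,2)$, $S\sim U(-1,0)$ be independent. Let $p_3^{PD}$ be the probability that $$P_{T,S}(x)=(T+S-1)x^3+\big(1-T-2S+q(S-1-T)\big)x^2+\big(S+q(T-S)\big)x$$ has exactly three distinct roots in $[0,1]$. Then $$p_3^{PD}=\frac{1}{1-2q}\,\mathrm{Area}(D\cap D_2),$$ where $D=\{(x,y)\in\mathbb{R}^2:\ -1<x<0,\ -\frac{x^2}{4q}-q<y<-q\}$ and $D_2$ is the open triangle with vertices $M=(-q,-(1-q))$, $N=\big(0,-\frac{1-2q}{1-q}\big)$, $O=(0,0)$, i.e. $D_2=\{(x,y):\ -q<x<0,\ \frac{qx-(1-2q)}{1-q}<y<\frac{(1-q)x}{q}\}$.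
   Context: ''Area'' denotes two-dimensional Lebesgue measure. *)

(* Defs.v *)
From HB Require Import structures.
From mathcomp Require Import all_boot all_order all_algebra.
From mathcomp Require Import all_classical all_reals all_analysis.
Set Implicit Arguments. Unset Strict Implicit. Unset Printing Implicit Defensive.
Import Order.TTheory GRing.Theory Num.Theory.
Local Open Scope classical_set_scope.
Local Open Scope ring_scope.

Definition PTS {R : realType} (q t s x : R) : R :=
  (t + s - 1) * x ^+ 3
  + (1 - t - 2 * s + q * (s - 1 - t)) * x ^+ 2
  + (s + q * (t - s)) * x.

Definition three_roots_01 {R : realType} (f : R -> R) : Prop :=
  exists x1 x2 x3 : R, x1 < x2 /\ x2 < x3 /\
    [set x | 0 <= x <= 1 /\ f x = 0] = [set x1; x2; x3].

Definition E3 {R : realType} (q : R) : set (R * R) :=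
  [set ts | three_roots_01 (PTS q ts.1 ts.2)].

Definition D {R : realType} (q : R) : set (R * R) :=
  [set xy | -1 < xy.1 < 0 /\ - (xy.1 ^+ 2) / (4 * q) - q < xy.2 < - q].

Definition D2 {R : realType} (q : R) : set (R * R) :=
  [set xy | -q < xy.1 < 0 /\
     (q * xy.1 - (1 - 2 * q)) / (1 - q) < xy.2 < (1 - q) * xy.1 / q].

Lemma lt_1_2 {R : realType} : (1 : R) < 2.
Proof. by rewrite ltr1n. Qed.

Lemma lt_m1_0 {R : realType} : (-1 : R) < 0.
Proof. by rewrite ltrN10. Qed.

(* Main.v *)
Require Import Defs.
From HB Require Import structures.
From mathcomp Require Import all_boot all_order all_algebra.
From mathcomp Require Import all_classical all_reals all_analysis.
From mathcomp Require Import ring lra.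
Import Order.TTheory GRing.Theory Num.Theory.
Local Open Scope classical_set_scope.
Local Open Scope ring_scope.

Section aff.
Variable R : realType.
Local Notation leb := (@lebesgue_measure R).

Lemma mg_aff (k m : R) : measurable_fun setT (fun y : R => k * y + m).
Proof. by apply: measurable_realfun.measurable_funD. Qed.

Lemma mg_aff' (k m : R) : measurable_fun (setT : set (measurableTypeR R))
   ((fun y : R => k * y + m) : measurableTypeR R -> measurableTypeR R).
Proof. exact: mg_aff. Qed.

Lemma leb_aff (k m : R) (k0 : 0 < k) (A : set R) : measurable A ->
  leb A = (k%:E * leb ((fun y => (k * y + m)%R) @^-1` A))%E.
Proof.
move=> mA.
have k0' : 0 <= k by exact: ltW.
pose mu0 := measure_function_pushforward__canonical__measure_function_Measure leb (mg_aff' k m).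
change (leb A = mscale (NngNum k0') mu0 A).
have h := @lebesgue_measure_unique R (mscale (NngNum k0') mu0).
apply: h mA.
move=> _ [[a b] _ <-] /=.
rewrite /mscale /=; rewrite /pushforward.
have -> : (fun y => k * y + m) @^-1` `]a, b] = `](a - m) / k, (b - m) / k]%classic.
  apply/seteqP; split => y /=; rewrite !in_itv /=.
    by move=> /andP[h1 h2]; rewrite ltr_pdivrMr // ler_pdivlMr // ; apply/andP; split; lra.
  by rewrite ltr_pdivrMr // ler_pdivlMr // => /andP[h1 h2]; apply/andP; split; lra.
rewrite !lebesgue_measure_itv /= !lte_fin.
have -> : ((a - m) / k < (b - m) / k) = (a < b).
  by rewrite ltr_pM2r ?invr_gt0 // ltrBlDr subrK.
case: ifPn => ab; last by rewrite mule0.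
rewrite -EFinD -EFinM; congr (_%:E).
field; exact: lt0r_neq0.
Qed.

Local Notation T := (measurableTypeR R).
Local Notation L2 := ((@lebesgue_measure R) \x (@lebesgue_measure R))%E.

Lemma shear2 (f : R -> R) (A : set (T * T)) : measurable A ->
  L2 [set p | A (p.1, p.2 + f p.1)] = L2 A.
Proof.
move=> mA; rewrite /product_measure1; apply: eq_integral => x _ /=.
rewrite [RHS](@leb_aff 1 (f x) ltr01); last exact: measurable_xsection.
rewrite mul1e.
congr (leb _); apply/seteqP; split => y; rewrite /xsection /= !inE /= mul1r //.
Qed.

Lemma scale2 (k : R) (k0 : 0 < k) (A : set (T * T)) : measurable A ->
  L2 [set p | A (p.1, k * p.2)] = ((k^-1)%:E * L2 A)%E.
Proof.
move=> mA; rewrite /product_measure1 -ge0_integralZl //; last 2 first.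
- exact: measurable_fun_xsection.
- by rewrite lee_fin invr_ge0 ltW.
apply: eq_integral => x _ /=.
rewrite (@leb_aff k 0 k0 (xsection A x)); last exact: measurable_xsection.
rewrite muleA -EFinM mulVf ?lt0r_neq0 // mul1e.
congr (leb _); apply/seteqP; split => y; rewrite /xsection /= !inE /= addr0 //.
Qed.

Lemma swap2 (A : set (T * T)) : measurable A ->
  L2 [set p | A (p.2, p.1)] = L2 A.
Proof.
move=> mA.
rewrite (@product_measure_unique _ _ T T R leb leb (leb \x^ leb)%E _ A mA); last first.
  move=> X Y mX mY.
exact: (product_measure2E leb leb mX mY).
rewrite /product_measure1 /product_measure2; apply: eq_integral => x _ /=.
congr (leb _); apply/seteqP; split => y; rewrite /xsection /ysection /= !inE //.
Qed.


Lemma meas_pre (h : T * T -> T * T) (A : set (T * T)) :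
  measurable_fun setT h -> measurable A -> measurable [set p | A (h p)].
Proof. by move=> mh mA; rewrite -[X in measurable X]setTI; exact: mh. Qed.

Lemma mSw : measurable_fun setT (fun p : T * T => (p.2, p.1)).
Proof. exact: measurable_fun_pair. Qed.

Lemma mSy (a b : R) : measurable_fun setT (fun p : T * T => (p.1, p.2 + (a * p.1 + b))).
Proof.
apply: measurable_fun_pair => //.
apply: measurable_realfun.measurable_funD => //.
apply: measurable_realfun.measurable_funD => //.
apply: measurable_realfun.measurable_funM => //.
Qed.

Lemma mMy (k : R) : measurable_fun setT (fun p : T * T => (p.1, k * p.2)).
Proof.
apply: measurable_fun_pair => //.
apply: measurable_realfun.measurable_funM => //.
Qed.


Definition phi (q : R) (p : R * R) : R * R :=
  ((1 - q) * p.1 + q * p.2 - 1 + q, q * p.1 + (1 - q) * p.2 - q).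

Lemma cov (q : R) (hq0 : 0 < q) (hq1 : q < 1 / 2) (A : set (T * T)) :
  measurable A ->
  L2 [set p | A (phi q p)] = (((1 - 2 * q)^-1)%:E * L2 A)%E.
Proof.
move=> mA.
have q1 : 0 < 1 - q by lra.
have q2 : 0 < 1 - 2 * q by lra.
pose k1 := 1 - q. pose k2 := (1 - 2 * q) / (1 - q).
pose a1 := q / (1 - q). pose b1 := - q / (1 - q).
pose a2 := q / (1 - q). pose b2 := q ^+ 2 / (1 - q) - 1 + q.
have k1p : 0 < k1 by [].
have k2p : 0 < k2 by rewrite /k2 divr_gt0.
pose B1 := [set p : T * T | A (p.2, p.1)].
pose B2 := [set p : T * T | B1 (p.1, p.2 + (a2 * p.1 + b2))].
pose B3 := [set p : T * T | B2 (p.1, k2 * p.2)].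
pose B4 := [set p : T * T | B3 (p.2, p.1)].
pose B5 := [set p : T * T | B4 (p.1, k1 * p.2)].
pose B6 := [set p : T * T | B5 (p.1, p.2 + (a1 * p.1 + b1))].
have mB1 : measurable B1 := meas_pre _ _ mSw mA.
have mB2 : measurable B2 := meas_pre _ _ (mSy a2 b2) mB1.
have mB3 : measurable B3 := meas_pre _ _ (mMy k2) mB2.
have mB4 : measurable B4 := meas_pre _ _ mSw mB3.
have mB5 : measurable B5 := meas_pre _ _ (mMy k1) mB4.
have -> : [set p | A (phi q p)] = B6.
  apply/seteqP; split => -[t s] /=; rewrite /B6 /B5 /B4 /B3 /B2 /B1 /=;
  have -> // : phi q (t, s) = (k2 * t + (a2 * (k1 * (s + (a1 * t + b1))) + b2),
                            k1 * (s + (a1 * t + b1)));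
  (rewrite /phi /k1 /k2 /a1 /b1 /a2 /b2 /=; congr pair; field; lra).
transitivity (L2 B5).
  exact: (shear2 (fun x => a1 * x + b1) B5 mB5).
transitivity ((k1^-1)%:E * L2 B4)%E; first exact: (scale2 k1 k1p B4 mB4).
transitivity ((k1^-1)%:E * L2 B3)%E; first by rewrite (swap2 B3 mB3).
transitivity ((k1^-1)%:E * ((k2^-1)%:E * L2 B2))%E; first by rewrite (scale2 k2 k2p B2 mB2).
transitivity ((k1^-1)%:E * ((k2^-1)%:E * L2 B1))%E.
  by rewrite (shear2 (fun x => a2 * x + b2) B1 mB1).
rewrite (swap2 A mA) muleA -EFinM; congr (_ * _)%E; congr (_%:E).
rewrite /k1 /k2; field; lra.
Qed.


Lemma unif_eq (a b : R) (ab : a < b) (hab : b - a = 1) (A : set T) :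
  measurable A -> uniform_prob ab A = leb (A `&` `]a, b[).
Proof.
move=> mA.
have mAab : measurable (A `&` `[a, b]) by exact: measurableI.
rewrite /uniform_prob integral_uniform_pdf.
transitivity (\int[leb]_(x in A `&` `[a, b]) (cst 1%:E) x)%E.
  apply: eq_integral => x; rewrite inE /= in_itv /= => -[_ hx].
  by rewrite /uniform_pdf hx hab invr1.
rewrite integral_cst // mul1e.
have -> : A `&` `[a, b] = (A `&` `]a, b[) `|` (A `&` ([set a] `|` [set b])).
  apply/seteqP; split => x /=; rewrite !in_itv /=.
    move=> [Ax /andP[h1 h2]].
    have [xa|xa] := eqVneq x a; first by right; split => //; left.
    have [xb|xb] := eqVneq x b; first by right; split => //; right.
    left; split => //; apply/andP; split; rewrite lt_neqAle ?h1 ?h2 ?andbT //.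
    by rewrite eq_sym.
  move=> [[Ax /andP[h1 h2]]|[Ax [xa|xb]]].
  - split; [exact: Ax | apply/andP; split; lra].
  - subst x; split; [exact: Ax | apply/andP; split; lra].
  - subst x; split; [exact: Ax | apply/andP; split; lra].
apply: measureU0.
- by apply: measurableI.
- by apply: measurableI => //; apply: measurableU.
apply/eqP; rewrite eq_le measure_ge0 andbT.
rewrite -(lebesgue_measure_set1 a) -[X in (_ <= X)%E]adde0 -(lebesgue_measure_set1 b).
apply: le_trans (measureU2 _ _ _) => //.
apply: le_measure; rewrite ?inE.
- by apply: measurableI => //; apply: measurableU.
- by apply: measurableU.
- by move=> x [].
Qed.


Lemma prod_unif (a1 b1 a2 b2 : R) (ab1 : a1 < b1) (ab2 : a2 < b2)
  (h1 : b1 - a1 = 1) (h2 : b2 - a2 = 1) (X : set (T * T)) : measurable X ->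
  ((uniform_prob ab1) \x (uniform_prob ab2))%E X =
  L2 (X `&` (`]a1, b1[ `*` `]a2, b2[)).
Proof.
move=> mX.
have mS : measurable (`]a1, b1[ `*` `]a2, b2[ : set (T * T)) by exact: measurableX.
have := @product_measure_unique _ _ T T R (uniform_prob ab1) (uniform_prob ab2)
  (mrestr L2 mS) _ X mX.
apply.
move=> A B mA mB.
change (L2 ((A `*` B) `&` (`]a1, b1[ `*` `]a2, b2[)) = (uniform_prob ab1 A * uniform_prob ab2 B)%E).
rewrite -setXI (product_measure1E leb leb).
- by rewrite !unif_eq.
- by apply: measurableI.
- by apply: measurableI.
Qed.


Lemma roots_fwd (q a b c : R) (f : R -> R) : 0 < q -> a + b + c = - q ->
  (forall x, f x = a * x ^+ 3 + b * x ^+ 2 + c * x) ->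
  three_roots_01 f ->
  a < 0 /\ c < 0 /\ 0 < b ^+ 2 - 4 * a * c /\ 0 < b /\ a < q + c.
Proof.
move=> q0 habc hf [x1 [x2 [x3 [h12 [h23 H]]]]].
have mem x : (0 <= x <= 1 /\ f x = 0) <-> ((x = x1 \/ x = x2) \/ x = x3).
  by have := congr1 (fun S : set R => S x) H; rewrite /= => ->.
have [/andP[x20 x21] f2] : 0 <= x2 <= 1 /\ f x2 = 0 by apply/mem; left; right.
have [/andP[x30 x31] f3] : 0 <= x3 <= 1 /\ f x3 = 0 by apply/mem; right.
have [/andP[x10 x11] _] : 0 <= x1 <= 1 /\ f x1 = 0 by apply/mem; left; left.
have x1e : x1 = 0.
  have : ((0 : R) = x1 \/ 0 = x2) \/ 0 = x3.
    by apply/mem; split; [rewrite lexx ler01 | rewrite hf; ring].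
  move=> [[<-//|e]|e]; lra.
have u0 : 0 < x2 by lra.
have Qu : a * x2 ^+ 2 + b * x2 + c = 0.
  have : x2 * (a * x2 ^+ 2 + b * x2 + c) = 0 by rewrite -f2 hf; ring.
  by move/eqP; rewrite mulf_eq0 => /orP[/eqP e|/eqP //]; lra.
have Qw : a * x3 ^+ 2 + b * x3 + c = 0.
  have : x3 * (a * x3 ^+ 2 + b * x3 + c) = 0 by rewrite -f3 hf; ring.
  by move/eqP; rewrite mulf_eq0 => /orP[/eqP e|/eqP //]; lra.
have w1 : x3 < 1.
  rewrite lt_neqAle x31 andbT; apply/eqP => e.
  by move: Qw; rewrite e; lra.
have hb : b = - a * (x2 + x3).
  have : (x2 - x3) * (a * (x2 + x3) + b) = 0.
    have -> : (x2 - x3) * (a * (x2 + x3) + b) = (a * x2 ^+ 2 + b * x2 + c) - (a * x3 ^+ 2 + b * x3 + c) by ring.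
    by rewrite Qu Qw subrr.
  move/eqP; rewrite mulf_eq0 => /orP[/eqP e|/eqP e]; first lra.
  nra.
have hc : c = a * x2 * x3 by nra.
have hq : a * ((1 - x2) * (1 - x3)) = - q by rewrite -habc hb hc; ring.
have p0 : 0 < (1 - x2) * (1 - x3) by apply: mulr_gt0; lra.
have an : a < 0.
  by rewrite ltNge; apply/negP => a0; have := mulr_ge0 a0 (ltW p0); rewrite hq; lra.
rewrite hb hc; split; first done.
have u3 : 0 < x2 * x3 by apply: mulr_gt0; lra.
split; first nra.
have hd : 0 < a * (x2 - x3) by nra.
split; first nra.
split; nra.
Qed.


Lemma roots_bwd (q a b c : R) (f : R -> R) : 0 < q -> a + b + c = - q ->
  (forall x, f x = a * x ^+ 3 + b * x ^+ 2 + c * x) ->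
  a < 0 -> c < 0 -> 0 < b ^+ 2 - 4 * a * c -> 0 < b -> a < q + c ->
  three_roots_01 f.
Proof.
move=> q0 habc hf an cn dp bp aqc.
pose d := b ^+ 2 - 4 * a * c.
pose r := Num.sqrt d.
have r0 : 0 < r by rewrite /r sqrtr_gt0.
have rr : r ^+ 2 = d by rewrite /r sqr_sqrtr // ltW.
pose m := - (2 * a).
have m0 : 0 < m by rewrite /m; lra.
pose z1 := (b - r) / m. pose z2 := (b + r) / m.
have acp : 0 < a * c by nra.
have rb : r < b.
  have : r ^+ 2 < b ^+ 2 by rewrite rr /d; lra.
  by move=> h; nra.
have rb2 : b + r < m.
  have h1 : 0 < m - b by rewrite /m; lra.
  suff : r < m - b by lra.
  have : r ^+ 2 < (m - b) ^+ 2 by rewrite rr /d /m; nra.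
  by move=> h; nra.
have z10 : 0 < z1 by rewrite /z1 divr_gt0 // subr_gt0.
have z12 : z1 < z2 by rewrite /z1 /z2 ltr_pM2r ?invr_gt0 //; lra.
have z21 : z2 < 1 by rewrite /z2 ltr_pdivrMr // mul1r.
have fact x : f x = x * (a * ((x - z1) * (x - z2))).
  have a0 : a != 0 by rewrite lt_eqF.
  have e : a * ((x - z1) * (x - z2)) - (a * x ^+ 2 + b * x + c) = (d - r ^+ 2) / (4 * a).
    rewrite /z1 /z2 /m /d; field; exact: a0.
  rewrite rr subrr mul0r in e.
  have -> : a * ((x - z1) * (x - z2)) = a * x ^+ 2 + b * x + c.
    by apply/eqP; rewrite -subr_eq0 e.
  rewrite hf; ring.
exists 0, z1, z2; split => //; split => //.
apply/seteqP; split => x /=.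
- move=> [/andP[x0 x1]]; rewrite fact => /eqP.
  rewrite !mulf_eq0 => /orP[/eqP ->|/orP[/eqP a0|/orP[]]]; first by left; left.
  + by move: an; rewrite a0 ltxx.
  + by rewrite subr_eq0 => /eqP ->; left; right.
  + by rewrite subr_eq0 => /eqP ->; right.
- move=> [[->|->]|->]; rewrite fact.
  + by rewrite lexx ler01 mul0r.
  + by rewrite subrr mul0r mulr0 mulr0; split => //; apply/andP; split; lra.
  + by rewrite subrr mulr0 mulr0 mulr0; split => //; apply/andP; split; lra.
Qed.


Lemma meas_lt (f g : T * T -> R) : measurable_fun setT f -> measurable_fun setT g ->
  measurable [set p | f p < g p].
Proof.
move=> mf mg; have := measurable_realfun.measurable_fun_ltr mf mg measurableT (Y := [set true]).
by rewrite setTI; apply.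
Qed.

Ltac mfun := repeat first [ apply: measurable_realfun.measurable_funD
  | apply: measurable_realfun.measurable_funB
  | apply: measurable_realfun.measurable_funM
  | apply: measurable_realfun.measurable_funN
  | apply: measurable_cst | apply: measurable_fst | apply: measurable_snd ].

Lemma mtest (q : R) : measurable_fun setT (fun p : T * T => 1 - p.1 - 2 * p.2 + q * (p.2 - 1 - p.1) - (p.1 ^+ 2)).
Proof.
mfun.
Qed.


Definition G0 (q : R) : set (T * T) := [set p |
  p.1 + p.2 - 1 < 0 /\ p.2 + q * (p.1 - p.2) < 0 /\
  0 < (1 - p.1 - 2 * p.2 + q * (p.2 - 1 - p.1)) ^+ 2 - 4 * (p.1 + p.2 - 1) * (p.2 + q * (p.1 - p.2)) /\
  0 < 1 - p.1 - 2 * p.2 + q * (p.2 - 1 - p.1) /\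
  p.1 + p.2 - 1 < q + (p.2 + q * (p.1 - p.2))].

Lemma mG0 q : measurable (G0 q).
Proof.
by repeat (apply: measurableI); apply: meas_lt; mfun.
Qed.

Lemma E3_G0 q : 0 < q -> E3 q = G0 q.
Proof.
move=> q0; apply/seteqP; split => -[t s] /=.
- move=> h; apply: (@roots_fwd q _ _ _ (PTS q t s) q0 _ _ h).
  + ring.
  + by move=> x; rewrite /PTS.
- move=> [h1 [h2 [h3 [h4 h5]]]].
  apply: (@roots_bwd q (t + s - 1) (1 - t - 2 * s + q * (s - 1 - t)) (s + q * (t - s)) (PTS q t s) q0 _ _ h1 h2 h3 h4 h5).
  + ring.
  + by move=> x; rewrite /PTS.
Qed.

Lemma meas_lt2 (f g h : T * T -> R) : measurable_fun setT f -> measurable_fun setT g ->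
  measurable_fun setT h -> measurable [set p | f p < g p < h p].
Proof.
move=> mf mg mh.
have -> : [set p | f p < g p < h p] = [set p | f p < g p] `&` [set p | g p < h p].
  by apply/seteqP; split => p /=; [move=> /andP[] | move=> [-> ->]].
by apply: measurableI; apply: meas_lt.
Qed.

Lemma mDD2 q : measurable (D q `&` D2 q : set (T * T)).
Proof.
rewrite /D /D2.
by repeat (apply: measurableI); apply: meas_lt2; mfun.
Qed.

Lemma core (q x y : R) : 0 < q -> q < 1 / 2 ->
 (x + y < 0 /\ y + q < 0 /\ 0 < x^+2 + 4*q*(y+q) /\ x + 2*y + 2*q < 0 /\ x < 2*q /\
  0 < (1-q)*x - q*y /\ (1-q)*x - q*y < 1-2*q /\ -(1-2*q) < -q*x + (1-q)*y /\ -q*x + (1-q)*y < 0)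
 <-> ((-1 < x < 0) /\ (- (x ^+ 2) / (4 * q) - q < y < - q)) /\
     ((-q < x < 0) /\ ((q * x - (1 - 2 * q)) / (1 - q) < y < (1 - q) * x / q)).
Proof.
move=> q0 q1.
have q1' : 0 < 1 - q by lra.
have q4 : 0 < 4 * q by lra.
have E1 : (- (x ^+ 2) / (4 * q) - q < y) = (0 < x^+2 + 4*q*(y+q)).
  rewrite ltrBlDr ltr_pdivrMr // -subr_gt0; apply/idP/idP => h; nra.
have E2 : ((q * x - (1 - 2 * q)) / (1 - q) < y) = (-(1-2*q) < -q*x + (1-q)*y).
  rewrite ltr_pdivrMr //; apply/idP/idP => h; nra.
have E3 : (y < (1 - q) * x / q) = (0 < (1-q)*x - q*y).
  rewrite ltr_pdivlMr //; apply/idP/idP => h; nra.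
rewrite E1 E2 E3; split.
- move=> [h1 [h2 [h3 [h4 [h5 [h6 [h7 [h8 h9]]]]]]]].
  have xn : x < 0 by nra.
  have xq : -q < x by nra.
  split; (split; [apply/andP; split; lra | apply/andP; split; lra]).
- move=> [[/andP[h1 h2] /andP[h3 h4]] [/andP[h5 h6] /andP[h7 h8]]].
  split; first lra. split; first lra. split; first lra. split; first lra. split; first lra.
  split; first lra. split; first nra. split; first lra. nra.
Qed.

End aff.

Arguments G0 {R}. Arguments phi {R}. Arguments core {R}.
Section aff2.
Variable R : realType.
Local Notation T := (measurableTypeR R).
Local Notation leb := (@lebesgue_measure R).
Local Notation L2 := ((@lebesgue_measure R) \x (@lebesgue_measure R))%E.
Lemma key (q t s : R) : 0 < q -> q < 1 / 2 ->
  (G0 q (t, s) /\ (1 < t < 2) /\ (-1 < s < 0)) <-> (D q `&` D2 q) (phi q (t, s)).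
Proof.
move=> q0 q1.
rewrite /phi /G0 /D /D2 /=.
set x := (1 - q) * t + q * s - 1 + q.
set y := q * t + (1 - q) * s - q.
rewrite -(core q x y q0 q1).
have e1 : x + y = t + s - 1 by rewrite /x /y; ring.
have e2 : y + q = s + q * (t - s) by rewrite /x /y; ring.
have e3 : x ^+ 2 + 4 * q * (y + q) = (1 - t - 2 * s + q * (s - 1 - t)) ^+ 2 - 4 * (t + s - 1) * (s + q * (t - s)) by rewrite /x /y; ring.
have e4 : x + 2 * y + 2 * q = - (1 - t - 2 * s + q * (s - 1 - t)) by rewrite /x /y; ring.
have e5 : x - 2 * q = (t + s - 1) - (q + (s + q * (t - s))) by rewrite /x /y; ring.
have e6 : (1 - q) * x - q * y = (1 - 2 * q) * (t - 1) by rewrite /x /y; ring.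
have e7 : - q * x + (1 - q) * y = (1 - 2 * q) * s by rewrite /x /y; ring.
have q2 : 0 < 1 - 2 * q by lra.
clearbody x y.
split.
- move=> [[h1 [h2 [h3 [h4 h5]]]] [/andP[t1 t2] /andP[s1 s2]]].
  do 8 (split; first nra); nra.
- move=> [h1 [h2 [h3 [h4 [h5 [h6 [h7 [h8 h9]]]]]]]].
  split; first by do 4 (split; first nra); nra.
  by split; apply/andP; split; nra.
Qed.


Lemma seteq_main (q : R) : 0 < q -> q < 1 / 2 ->
  E3 q `&` (`]1, 2[ `*` `]-1, 0[) = [set p : T * T | (D q `&` D2 q) (phi q p)].
Proof.
move=> q0 q1; rewrite E3_G0 //; apply/seteqP; split => -[t s] /=.
- rewrite !in_itv /= => -[hG [ht hs]].
  by apply/(key q t s q0 q1).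
- move/(key q t s q0 q1) => -[hG [ht hs]].
  by rewrite !in_itv /=.
Qed.

End aff2.

Theorem proposition2p4 (R : realType) (q : R) (hq0 : 0 < q) (hq1 : q < 1 / 2) :
  ((uniform_prob (@lt_1_2 R) \x uniform_prob (@lt_m1_0 R)) (E3 q)
   = ((1 - 2 * q)^-1)%:E
     * ((@lebesgue_measure R) \x (@lebesgue_measure R)) (D q `&` D2 q))%E.
Proof.
have mE : measurable (E3 q : set (measurableTypeR R * measurableTypeR R)).
  by rewrite (@E3_G0 R q hq0); exact: mG0.
rewrite (@prod_unif R 1 2 (-1) 0 (@lt_1_2 R) (@lt_m1_0 R) _ _ _ mE); last 2 first.
- lra.
- lra.
rewrite (@seteq_main R q hq0 hq1).
exact: (@cov R q hq0 hq1 _ (@mDD2 R q)).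
Qed.
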